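(* Let $\mathcal D$ be an ordered, oriented Descartes configuration with integer curvatures $(b_1,b_2,b_3,b_4)$ and let $g=\gcd(b_1,b_2,b_3,b_4)$. Then the Apollonian super-packing $\mathcal A^S[\mathcal D]$ contains a Descartes configuration whose curvature vector is a permutation of $(0,0,g,g)$ if $b_1+b_2+b_3+b_4>0$, and a permutation of $(0,0,-g,-g)$ if $b_1+b_2+b_3+b_4<0$.
   Context: Circles are taken in $\hat{\mathbb C}=\mathbb R^2\cup\{\infty\}$; lines count as circles. A Descartes configuration is a set of four mutually tangent circles with disjoint interiors; an ordered, oriented one carries an ordering and a total orientation, and the signed curvature of a circle is its reciprocal radius, negative for a circle whose interior is unbounded, $0$ for a line, with all signs reversed for negative total orientation. The curvature vector is $(b_1,\dots,b_4)^T$; it satisfies the Descartes relation $\sum b_i^2=\tfrac12(\sum b_i)^2$. Let $S_i$ be the $4\times4$ integer matrix equal to the identity except that row $i$ has $-1$ in position $i$ and $2$ in the other positions, $S_i^\perp=S_i^T$, and $\mathcal A^S=\langle S_1,\dots,S_4,S_1^\perp,\dots,S_4^\perp\rangle$ the super-Apollonian group. It acts on ordered oriented Descartes configurations by left multiplication on their augmented curvature-center coordinate matrices; in particular the curvature vector of $U[\mathcal D]$ is $U$ times the curvature vector of $\mathcal D$. The super-packing generated by $\mathcal D$ is the orbit $\mathcal A^S[\mathcal D]$. *)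

(* Defs.v *)
From mathcomp Require Import all_boot all_order all_algebra.
Set Implicit Arguments. Unset Strict Implicit. Unset Printing Implicit Defensive.
Import Order.TTheory GRing.Theory Num.Theory.
Local Open Scope ring_scope.

Definition S_gen (i : 'I_4) : 'M[int]_4 :=
  \matrix_(j < 4, k < 4)
    (if j == i then (if k == i then -1 else 2) else (j == k)%:R).

Definition S_perp (i : 'I_4) : 'M[int]_4 := (S_gen i)^T.

(* Membership in the super-Apollonian group A^S = <S_1..S_4, S_1^T..S_4^T>.
   All generators are involutions, so the group generated equals the set of
   finite products of generators (including the empty product). *)
Inductive in_superApollonian : 'M[int]_4 -> Prop :=
| sA_id : in_superApollonian 1%:M
| sA_S : forall i U, in_superApollonian U -> in_superApollonian (S_gen i *m U)
| sA_Sp : forall i U, in_superApollonian U -> in_superApollonian (S_perp i *m U).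

(* Descartes relation: sum b_i^2 = 1/2 (sum b_i)^2, i.e. 2 sum b_i^2 = (sum b_i)^2. *)
Definition descartes_rel (b : 'cV[int]_4) : Prop :=
  2 * (\sum_(i < 4) b i 0 ^+ 2) = (\sum_(i < 4) b i 0) ^+ 2.

Definition gcd4 (b : 'cV[int]_4) : int :=
  gcdz (gcdz (b 0 0) (b 1 0)) (gcdz (b 2%:R 0) (b 3%:R 0)).

Definition entries (b : 'cV[int]_4) : seq int := [seq b i 0 | i <- enum 'I_4].

(* Main.v *)
Require Import Defs.
From mathcomp Require Import all_boot all_order all_algebra.
From mathcomp Require Import ring lra zify.
Import Order.TTheory GRing.Theory Num.Theory.
Local Open Scope ring_scope.
Definition null4 (a b c d : int) := 2 * (a^+2 + b^+2 + c^+2 + d^+2) = (a+b+c+d)^+2.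

Lemma cs3 (b c d : int) : (b+c+d)^+2 <= 3*(b^+2+c^+2+d^+2).
Proof.
rewrite -subr_ge0.
have -> : 3*(b^+2+c^+2+d^+2) - (b+c+d)^+2 = (b-c)^+2 + (c-d)^+2 + (b-d)^+2 by ring.
by rewrite !addr_ge0 ?sqr_ge0.
Qed.

Lemma pos_perp a b c d : null4 a b c d -> 0 < a+b+c+d -> a < 0 -> 0 < a+b+c+d + 4*a.
Proof.
rewrite /null4 => H hs ha.
have H3 := cs3 b c d.
set r := b+c+d.
have Hr : r^+2 + 6*a*r - 3*a^+2 >= 0 by rewrite /r; nra.
rewrite ltNge; apply/negP => hn.
have : r * (-5*a - r) >= 0 by apply: mulr_ge0; rewrite /r; lra.
nra.
Qed.
Lemma pos_gen a b c d : null4 a b c d -> 0 < a+b+c+d -> a+b+c+d < 2*a -> 0 < 3*(a+b+c+d) - 4*a.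
Proof.
rewrite /null4 => H hs ha.
have H3 := cs3 b c d.
set r := b+c+d.
have Hr : r^+2 + 6*a*r - 3*a^+2 >= 0 by rewrite /r; nra.
rewrite ltNge; apply/negP => hn.
have h1 : (r + a) * (a - 3*r) >= 0 by apply: mulr_ge0; rewrite /r; lra.
have h2 : a * (a - 3*r) >= 0 by apply: mulr_ge0; rewrite /r; lra.
nra.
Qed.

Lemma key a b c d : null4 a b c d -> 0 <= a -> 0 <= b -> 0 <= c -> a <= d -> b <= d -> c <= d ->
  a <= c -> b <= c -> d <= a + b + c -> a = 0 /\ b = 0.
Proof.
rewrite /null4 => H ha hb hc ad bd cd ac bc dl.
have E : (a+b+c-d)^+2 = 4*(a*b+b*c+c*a).
  have -> : (a+b+c-d)^+2 = 2 * (a^+2 + b^+2 + c^+2 + d^+2) - (a+b+c+d)^+2 + 4*(a*b+b*c+c*a) by ring.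
  by rewrite H; ring.
have E2 : (a+b+c-d)^+2 <= (a+b)^+2.
  rewrite !expr2; apply: ler_pM; lra.
have E3 : (a-b)^+2 <= c*(a+b).
  case: (leP a b) => hab.
    have -> : (a-b)^+2 = (b-a)*(b-a) by ring.
    apply: ler_pM; lra.
  rewrite expr2; apply: ler_pM; lra.
have E4 : c*(a+b) <= 0 by nra.
have E5 : 0 <= c*(a+b) by apply: mulr_ge0; lra.
have E6 : c*(a+b) = 0 by lra.
move/eqP: E6; rewrite mulf_eq0 => /orP[/eqP|/eqP] h; lra.
Qed.
Definition g4 (a b c d : int) := gcdz (gcdz a b) (gcdz c d).

Lemma nperm a b c d x y z w : null4 a b c d ->
  a^+2+b^+2+c^+2+d^+2 = x^+2+y^+2+z^+2+w^+2 -> a+b+c+d = x+y+z+w -> null4 x y z w.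
Proof. by rewrite /null4 => H <- <-. Qed.


Lemma L3 x y z w : null4 x y z w -> 0 <= x -> 0 <= y -> 0 <= z ->
  x <= w -> y <= w -> z <= w -> 2*w <= x+y+z+w ->
  (x=0/\y=0) \/ (x=0/\z=0) \/ (y=0/\z=0).
Proof.
move=> H hx hy hz h1 h2 h3 h4.
have Kz : x <= z -> y <= z -> x = 0 /\ y = 0.
  by move=> ? ?; apply: (@key x y z w) => //; lra.
have Ky : x <= y -> z <= y -> x = 0 /\ z = 0.
  by move=> ? ?; apply: (@key x z y w) => //; [apply: (nperm _ _ _ _ _ _ _ _ H); ring | lra].
have Kx : y <= x -> z <= x -> y = 0 /\ z = 0.
  by move=> ? ?; apply: (@key y z x w) => //; [apply: (nperm _ _ _ _ _ _ _ _ H); ring | lra].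
case: (leP x z) => xz; case: (leP y z) => yz.
- by left; apply: Kz.
- by right; left; apply: Ky; lra.
- by right; right; apply: Kx; lra.
- case: (leP x y) => xy.
  + by right; left; apply: Ky; lra.
  + by right; right; apply: Kx; lra.
Qed.

Lemma two0 a b c d : null4 a b c d -> 0 <= a -> 0 <= b -> 0 <= c -> 0 <= d ->
  2*a <= a+b+c+d -> 2*b <= a+b+c+d -> 2*c <= a+b+c+d -> 2*d <= a+b+c+d ->
  (a=0/\b=0) \/ (a=0/\c=0) \/ (a=0/\d=0) \/ (b=0/\c=0) \/ (b=0/\d=0) \/ (c=0/\d=0).
Proof.
move=> H ha hb hc hd h1 h2 h3 h4.
have : (a <= d /\ b <= d /\ c <= d) \/ (a <= c /\ b <= c /\ d <= c) \/
       (a <= b /\ c <= b /\ d <= b) \/ (b <= a /\ c <= a /\ d <= a) by lia.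
case=> [[? [? ?]]|[[? [? ?]]|[[? [? ?]]|[? [? ?]]]]].
- have : (a=0/\b=0) \/ (a=0/\c=0) \/ (b=0/\c=0) by apply: (@L3 a b c d) => //; lra.
  tauto.
- have : (a=0/\b=0) \/ (a=0/\d=0) \/ (b=0/\d=0).
    by apply: (@L3 a b d c) => //; [apply: (nperm _ _ _ _ _ _ _ _ H); ring | lra].
  tauto.
- have : (a=0/\c=0) \/ (a=0/\d=0) \/ (c=0/\d=0).
    by apply: (@L3 a c d b) => //; [apply: (nperm _ _ _ _ _ _ _ _ H); ring | lra].
  tauto.
- have : (b=0/\c=0) \/ (b=0/\d=0) \/ (c=0/\d=0).
    by apply: (@L3 b c d a) => //; [apply: (nperm _ _ _ _ _ _ _ _ H); ring | lra].
  tauto.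
Qed.
Lemma sq0 (c d : int) : 2*(c^+2+d^+2) = (c+d)^+2 -> c = d.
Proof.
move=> H; apply/eqP; rewrite -subr_eq0 -sqrf_eq0; apply/eqP.
have -> : (c-d)^+2 = 2*(c^+2+d^+2) - (c+d)^+2 by ring.
by rewrite H subrr.
Qed.

Lemma term a b c d : null4 a b c d -> 0 <= a -> 0 <= b -> 0 <= c -> 0 <= d ->
  2*a <= a+b+c+d -> 2*b <= a+b+c+d -> 2*c <= a+b+c+d -> 2*d <= a+b+c+d -> 0 < a+b+c+d ->
  exists h, 0 < h /\ perm_eq [:: a; b; c; d] [:: 0; 0; h; h] /\ g4 a b c d = h.
Proof.
move=> H ha hb hc hd h1 h2 h3 h4 hs.
have := @two0 a b c d H ha hb hc hd h1 h2 h3 h4; rewrite /null4 in H.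
case=> [[? ?]|[[? ?]|[[? ?]|[[? ?]|[[? ?]|[? ?]]]]]]; subst.
- have E : c = d by apply: sq0; move: H; rewrite !expr0n /= !(add0r, addr0).
  rewrite E in hs *; exists d; split; [lra | split; [apply/permP => p /=; by case: (p 0); case: (p _) | rewrite /g4 ?gcd0z ?gcdz0 ?gcdzz /= ?gcd0z ?gcdz0 ?gcdzz /=; rewrite gtz0_abs //; lra]].
- have E : b = d by apply: sq0; move: H; rewrite !expr0n /= !(add0r, addr0).
  rewrite E in hs *; exists d; split; [lra | split; [apply/permP => p /=; by case: (p 0); case: (p _) | rewrite /g4 ?gcd0z ?gcdz0 ?gcdzz /= ?gcd0z ?gcdz0 ?gcdzz /= gtz0_abs //; lra]].
- have E : b = c by apply: sq0; move: H; rewrite !expr0n /= !(add0r, addr0).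
  rewrite E in hs *; exists c; split; [lra | split; [apply/permP => p /=; by case: (p 0); case: (p _) | rewrite /g4 ?gcd0z ?gcdz0 ?gcdzz /= ?gcd0z ?gcdz0 ?gcdzz /= gtz0_abs //; lra]].
- have E : a = d by apply: sq0; move: H; rewrite !expr0n /= !(add0r, addr0).
  rewrite E in hs *; exists d; split; [lra | split; [apply/permP => p /=; by case: (p 0); case: (p _) | rewrite /g4 ?gcd0z ?gcdz0 ?gcdzz /= ?gcd0z ?gcdz0 ?gcdzz /= gtz0_abs //; lra]].
- have E : a = c by apply: sq0; move: H; rewrite !expr0n /= !(add0r, addr0).
  rewrite E in hs *; exists c; split; [lra | split; [apply/permP => p /=; by case: (p 0); case: (p _) | rewrite /g4 ?gcd0z ?gcdz0 ?gcdzz /= ?gcd0z ?gcdz0 ?gcdzz /= gtz0_abs //; lra]].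
- have E : a = b by apply: sq0; move: H; rewrite !expr0n /= !(add0r, addr0).
  rewrite E in hs *; exists b; split; [lra | split; [apply/permP => p /=; by case: (p 0); case: (p _) | rewrite /g4 ?gcd0z ?gcdz0 ?gcdzz /= ?gcd0z ?gcdz0 ?gcdzz /= gtz0_abs //; lra]].
Qed.

Definition v4 (a b c d : int) : 'cV[int]_4 := \col_(k < 4) nth 0 [:: a; b; c; d] k.

Definition o0 : 'I_4 := @Ordinal 4 0 isT.
Definition o1 : 'I_4 := @Ordinal 4 1 isT.
Definition o2 : 'I_4 := @Ordinal 4 2 isT.
Definition o3 : 'I_4 := @Ordinal 4 3 isT.


Lemma Sg0 a b c d : S_gen o0 *m v4 a b c d = v4 (2*(b+c+d) - a) b c d. Proof. apply/matrixP=> i j; rewrite !mxE (ord1 j) !big_ord_recr big_ord0 /= !mxE /=; case: i => [[|[|[|[|?]]]] Hi] //=; ring. Qed.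
Lemma Sg1 a b c d : S_gen o1 *m v4 a b c d = v4 a (2*(a+c+d) - b) c d. Proof. apply/matrixP=> i j; rewrite !mxE (ord1 j) !big_ord_recr big_ord0 /= !mxE /=; case: i => [[|[|[|[|?]]]] Hi] //=; ring. Qed.
Lemma Sg2 a b c d : S_gen o2 *m v4 a b c d = v4 a b (2*(a+b+d) - c) d. Proof. apply/matrixP=> i j; rewrite !mxE (ord1 j) !big_ord_recr big_ord0 /= !mxE /=; case: i => [[|[|[|[|?]]]] Hi] //=; ring. Qed.
Lemma Sg3 a b c d : S_gen o3 *m v4 a b c d = v4 a b c (2*(a+b+c) - d). Proof. apply/matrixP=> i j; rewrite !mxE (ord1 j) !big_ord_recr big_ord0 /= !mxE /=; case: i => [[|[|[|[|?]]]] Hi] //=; ring. Qed.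
Lemma Sp0 a b c d : S_perp o0 *m v4 a b c d = v4 (-a) (b+2*a) (c+2*a) (d+2*a). Proof. apply/matrixP=> i j; rewrite !mxE (ord1 j) !big_ord_recr big_ord0 /= !mxE /=; case: i => [[|[|[|[|?]]]] Hi] //=; ring. Qed.
Lemma Sp1 a b c d : S_perp o1 *m v4 a b c d = v4 (a+2*b) (-b) (c+2*b) (d+2*b). Proof. apply/matrixP=> i j; rewrite !mxE (ord1 j) !big_ord_recr big_ord0 /= !mxE /=; case: i => [[|[|[|[|?]]]] Hi] //=; ring. Qed.
Lemma Sp2 a b c d : S_perp o2 *m v4 a b c d = v4 (a+2*c) (b+2*c) (-c) (d+2*c). Proof. apply/matrixP=> i j; rewrite !mxE (ord1 j) !big_ord_recr big_ord0 /= !mxE /=; case: i => [[|[|[|[|?]]]] Hi] //=; ring. Qed.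
Lemma Sp3 a b c d : S_perp o3 *m v4 a b c d = v4 (a+2*d) (b+2*d) (c+2*d) (-d). Proof. apply/matrixP=> i j; rewrite !mxE (ord1 j) !big_ord_recr big_ord0 /= !mxE /=; case: i => [[|[|[|[|?]]]] Hi] //=; ring. Qed.

Lemma entries_v4 a b c d : entries (v4 a b c d) = [:: a; b; c; d].
Proof. by rewrite /entries !enum_ordSl enum_ord0 /= !mxE. Qed.

Lemma v4E (x : 'cV[int]_4) : x = v4 (x 0 0) (x 1 0) (x 2%:R 0) (x 3%:R 0).
Proof.
apply/matrixP=> i j; rewrite !mxE (ord1 j).
by case: i => [[|[|[|[|?]]]] Hi] //=; congr (x _ _); apply/val_inj.
Qed.

Lemma sA_r U M : in_superApollonian U ->
  (M = S_gen o0 \/ M = S_gen o1 \/ M = S_gen o2 \/ M = S_gen o3 \/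
   M = S_perp o0 \/ M = S_perp o1 \/ M = S_perp o2 \/ M = S_perp o3) ->
  in_superApollonian (U *m M).
Proof.
move=> hU hM; elim: hU => [|j V hV IH|j V hV IH].
- rewrite mul1mx -[M]mulmx1.
  by case: hM => [->|[->|[->|[->|[->|[->|[->| ->]]]]]]]; do ? constructor.
- by rewrite -mulmxA; constructor.
- by rewrite -mulmxA; constructor.
Qed.


Lemma g4_dvd g a b c d : (g %| g4 a b c d)%Z = [&& (g %| a)%Z, (g %| b)%Z, (g %| c)%Z & (g %| d)%Z].
Proof. by rewrite /g4 !dvdz_gcd !andbA. Qed.

Lemma g4_eq a b c d a' b' c' d' :
  (g4 a b c d %| a')%Z -> (g4 a b c d %| b')%Z -> (g4 a b c d %| c')%Z -> (g4 a b c d %| d')%Z ->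
  (g4 a' b' c' d' %| a)%Z -> (g4 a' b' c' d' %| b)%Z -> (g4 a' b' c' d' %| c)%Z -> (g4 a' b' c' d' %| d)%Z ->
  g4 a' b' c' d' = g4 a b c d.
Proof.
move=> h1 h2 h3 h4 h5 h6 h7 h8.
have D1 : (g4 a b c d %| g4 a' b' c' d')%Z by rewrite g4_dvd h1 h2 h3 h4.
have D2 : (g4 a' b' c' d' %| g4 a b c d)%Z by rewrite g4_dvd h5 h6 h7 h8.
move: D1 D2; rewrite /g4 /gcdz !dvdzE /= => D1 D2.
by congr Posz; apply/eqP; rewrite eqn_dvd D1 D2.
Qed.

Lemma g4a a b c d : (g4 a b c d %| a)%Z.
Proof. by have := dvdz_gcdl (gcdz a b) (gcdz c d); rewrite -/(g4 a b c d) dvdz_gcd => /andP[]. Qed.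
Lemma g4b a b c d : (g4 a b c d %| b)%Z.
Proof. by have := dvdz_gcdl (gcdz a b) (gcdz c d); rewrite -/(g4 a b c d) dvdz_gcd => /andP[]. Qed.
Lemma g4c a b c d : (g4 a b c d %| c)%Z.
Proof. by have := dvdz_gcdr (gcdz a b) (gcdz c d); rewrite -/(g4 a b c d) dvdz_gcd => /andP[]. Qed.
Lemma g4d a b c d : (g4 a b c d %| d)%Z.
Proof. by have := dvdz_gcdr (gcdz a b) (gcdz c d); rewrite -/(g4 a b c d) dvdz_gcd => /andP[]. Qed.

Lemma dv_rw g x y : x = y -> (g %| y)%Z -> (g %| x)%Z.
Proof. by move=> ->. Qed.

Lemma dvD g x y : (g %| x)%Z -> (g %| y)%Z -> (g %| x + y)%Z.
Proof. by move=> hx hy; rewrite rpredD. Qed.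
Lemma dvN g x : (g %| x)%Z -> (g %| - x)%Z.
Proof. by rewrite !dvdzE abszN. Qed.

Ltac gdv := repeat match goal with
 | |- is_true (?x \in ?P) =>
   first [ match P with context [g4 ?p ?q ?r ?s] =>
          first [ constr_eq x p; exact: (g4a p q r s)
                | constr_eq x q; exact: (g4b p q r s)
                | constr_eq x r; exact: (g4c p q r s)
                | constr_eq x s; exact: (g4d p q r s) ] end
         | match x with
           | _ + _ => apply: dvD
           | - _ => apply: dvN
           | _ * _ => apply: dvdz_mull
           end ]
 end.

Lemma g4_Sg0 a b c d : g4 (2*(b+c+d) - a) (b) (c) (d) = g4 a b c d.
Proof.
apply: g4_eq; try gdv.
- by apply: (@dv_rw _ _ (2*(b+c+d) - (2*(b+c+d) - a))); [ring | gdv].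
Qed.

Lemma g4_Sg1 a b c d : g4 (a) (2*(a+c+d) - b) (c) (d) = g4 a b c d.
Proof.
apply: g4_eq; try gdv.
- by apply: (@dv_rw _ _ (2*((a)+(c)+(d)) - (2*(a+c+d) - b))); [ring | gdv].
Qed.

Lemma g4_Sg2 a b c d : g4 (a) (b) (2*(a+b+d) - c) (d) = g4 a b c d.
Proof.
apply: g4_eq; try gdv.
- by apply: (@dv_rw _ _ (2*((a)+(b)+(d)) - (2*(a+b+d) - c))); [ring | gdv].
Qed.

Lemma g4_Sg3 a b c d : g4 (a) (b) (c) (2*(a+b+c) - d) = g4 a b c d.
Proof.
apply: g4_eq; try gdv.
- by apply: (@dv_rw _ _ (2*((a)+(b)+(c)) - (2*(a+b+c) - d))); [ring | gdv].
Qed.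

Lemma g4_Sp0 a b c d : g4 (-a) (b+2*a) (c+2*a) (d+2*a) = g4 a b c d.
Proof.
apply: g4_eq; try gdv.
- by apply: (@dv_rw _ _ (-(-a))); [ring | gdv].
- by apply: (@dv_rw _ _ ((b+2*a)+2*(-a))); [ring | gdv].
- by apply: (@dv_rw _ _ ((c+2*a)+2*(-a))); [ring | gdv].
- by apply: (@dv_rw _ _ ((d+2*a)+2*(-a))); [ring | gdv].
Qed.

Lemma g4_Sp1 a b c d : g4 (a+2*b) (-b) (c+2*b) (d+2*b) = g4 a b c d.
Proof.
apply: g4_eq; try gdv.
- by apply: (@dv_rw _ _ ((a+2*b)+2*(-b))); [ring | gdv].
- by apply: (@dv_rw _ _ (-(-b))); [ring | gdv].
- by apply: (@dv_rw _ _ ((c+2*b)+2*(-b))); [ring | gdv].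
- by apply: (@dv_rw _ _ ((d+2*b)+2*(-b))); [ring | gdv].
Qed.

Lemma g4_Sp2 a b c d : g4 (a+2*c) (b+2*c) (-c) (d+2*c) = g4 a b c d.
Proof.
apply: g4_eq; try gdv.
- by apply: (@dv_rw _ _ ((a+2*c)+2*(-c))); [ring | gdv].
- by apply: (@dv_rw _ _ ((b+2*c)+2*(-c))); [ring | gdv].
- by apply: (@dv_rw _ _ (-(-c))); [ring | gdv].
- by apply: (@dv_rw _ _ ((d+2*c)+2*(-c))); [ring | gdv].
Qed.

Lemma g4_Sp3 a b c d : g4 (a+2*d) (b+2*d) (c+2*d) (-d) = g4 a b c d.
Proof.
apply: g4_eq; try gdv.
- by apply: (@dv_rw _ _ ((a+2*d)+2*(-d))); [ring | gdv].
- by apply: (@dv_rw _ _ ((b+2*d)+2*(-d))); [ring | gdv].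
- by apply: (@dv_rw _ _ ((c+2*d)+2*(-d))); [ring | gdv].
- by apply: (@dv_rw _ _ (-(-d))); [ring | gdv].
Qed.


Definition goodP a b c d := exists U, in_superApollonian U /\ exists h, 0 < h /\
  perm_eq (entries (U *m v4 a b c d)) [:: 0; 0; h; h] /\ g4 a b c d = h.

Lemma stepP M a b c d a' b' c' d' :
  (M = S_gen o0 \/ M = S_gen o1 \/ M = S_gen o2 \/ M = S_gen o3 \/
   M = S_perp o0 \/ M = S_perp o1 \/ M = S_perp o2 \/ M = S_perp o3) ->
  M *m v4 a b c d = v4 a' b' c' d' -> g4 a' b' c' d' = g4 a b c d ->
  goodP a' b' c' d' -> goodP a b c d.
Proof.
move=> hM E G [U [hU [h [hh [hp hg]]]]].
exists (U *m M); split; first exact: sA_r.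
by exists h; rewrite -mulmxA E -G.
Qed.

Definition Q4 (a b c d : int) := 2 * (a^+2 + b^+2 + c^+2 + d^+2) - (a+b+c+d)^+2.
Lemma nullQ a b c d : null4 a b c d <-> Q4 a b c d = 0.
Proof. by rewrite /null4 /Q4; split => [->|/eqP]; [rewrite subrr | rewrite subr_eq0 => /eqP]. Qed.

Lemma mainP (n : nat) : forall a b c d, null4 a b c d -> 0 < a+b+c+d -> a+b+c+d <= n%:Z -> goodP a b c d.
Proof.
elim: n => [|n IH] a b c d H hs hn; first by have := lt_le_trans hs hn; rewrite ltxx.
rewrite intS in hn.
case: (ltP a 0) => ha.
  apply: (@stepP (S_perp o0) a b c d (-a) (b+2*a) (c+2*a) (d+2*a)); [by do 4 right; left | exact: Sp0 | exact: g4_Sp0 |].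
  have hp := @pos_perp a b c d H hs ha.
  move/nullQ: H => H.
  apply: IH; [apply/nullQ; rewrite -H /Q4; ring | lra | lia].
case: (ltP b 0) => hb.
  apply: (@stepP (S_perp o1) a b c d (a+2*b) (-b) (c+2*b) (d+2*b)); [by do 5 right; left | exact: Sp1 | exact: g4_Sp1 |].
  have hp := @pos_perp b a c d (nperm a b c d b a c d H ltac:(ring) ltac:(ring)) ltac:(lra) hb.
  move/nullQ: H => H.
  apply: IH; [apply/nullQ; rewrite -H /Q4; ring | lra | lia].
case: (ltP c 0) => hc.
  apply: (@stepP (S_perp o2) a b c d (a+2*c) (b+2*c) (-c) (d+2*c)); [by do 6 right; left | exact: Sp2 | exact: g4_Sp2 |].
  have hp := @pos_perp c a b d (nperm a b c d c a b d H ltac:(ring) ltac:(ring)) ltac:(lra) hc.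
  move/nullQ: H => H.
  apply: IH; [apply/nullQ; rewrite -H /Q4; ring | lra | lia].
case: (ltP d 0) => hd.
  apply: (@stepP (S_perp o3) a b c d (a+2*d) (b+2*d) (c+2*d) (-d)); [by do 7 right | exact: Sp3 | exact: g4_Sp3 |].
  have hp := @pos_perp d a b c (nperm a b c d d a b c H ltac:(ring) ltac:(ring)) ltac:(lra) hd.
  move/nullQ: H => H.
  apply: IH; [apply/nullQ; rewrite -H /Q4; ring | lra | lia].
case: (ltP (a+b+c+d) (2*a)) => ga.
  apply: (@stepP (S_gen o0) a b c d (2*(b+c+d) - a) b c d); [by left | exact: Sg0 | exact: g4_Sg0 |].
  have hp := @pos_gen a b c d H hs ga.
  move/nullQ: H => H.
  apply: IH; [apply/nullQ; rewrite -H /Q4; ring | lra | lia].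
case: (ltP (a+b+c+d) (2*b)) => gb.
  apply: (@stepP (S_gen o1) a b c d a (2*(a+c+d) - b) c d); [by right; left | exact: Sg1 | exact: g4_Sg1 |].
  have hp := @pos_gen b a c d (nperm a b c d b a c d H ltac:(ring) ltac:(ring)) ltac:(lra) ltac:(lra).
  move/nullQ: H => H.
  apply: IH; [apply/nullQ; rewrite -H /Q4; ring | lra | lia].
case: (ltP (a+b+c+d) (2*c)) => gc.
  apply: (@stepP (S_gen o2) a b c d a b (2*(a+b+d) - c) d); [by do 2 right; left | exact: Sg2 | exact: g4_Sg2 |].
  have hp := @pos_gen c a b d (nperm a b c d c a b d H ltac:(ring) ltac:(ring)) ltac:(lra) ltac:(lra).
  move/nullQ: H => H.
  apply: IH; [apply/nullQ; rewrite -H /Q4; ring | lra | lia].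
case: (ltP (a+b+c+d) (2*d)) => gd.
  apply: (@stepP (S_gen o3) a b c d a b c (2*(a+b+c) - d)); [by do 3 right; left | exact: Sg3 | exact: g4_Sg3 |].
  have hp := @pos_gen d a b c (nperm a b c d d a b c H ltac:(ring) ltac:(ring)) ltac:(lra) ltac:(lra).
  move/nullQ: H => H.
  apply: IH; [apply/nullQ; rewrite -H /Q4; ring | lra | lia].
have [h [hh [hp hg]]] := @term a b c d H ha hb hc hd ga gb gc gd hs.
exists 1%:M; split; first exact: sA_id.
by exists h; rewrite mul1mx entries_v4.
Qed.


Lemma sum_v4 a b c d : \sum_(i < 4) (v4 a b c d) i 0 = a + b + c + d.
Proof. by rewrite !big_ord_recr big_ord0 /= !mxE /= add0r. Qed.

Lemma sumsq_v4 a b c d : \sum_(i < 4) (v4 a b c d) i 0 ^+ 2 = a^+2 + b^+2 + c^+2 + d^+2.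
Proof. by rewrite !big_ord_recr big_ord0 /= !mxE /= add0r. Qed.

Lemma entriesN (w : 'cV[int]_4) : entries (- w) = map (fun x => - x) (entries w).
Proof. by rewrite /entries !enum_ordSl enum_ord0 /= !mxE. Qed.

Lemma v4N a b c d : v4 (-a) (-b) (-c) (-d) = - v4 a b c d.
Proof. by apply/matrixP=> i j; rewrite !mxE; case: i => [[|[|[|[|?]]]] Hi]. Qed.

Lemma g4N a b c d : g4 (-a) (-b) (-c) (-d) = g4 a b c d.
Proof. by rewrite /g4 !gcdNz !gcdzN. Qed.

Theorem theorem4p2 (b : 'cV[int]_4) :
  descartes_rel b ->
  (0 < \sum_(i < 4) b i 0 ->
     exists U, in_superApollonian U /\
       perm_eq (entries (U *m b)) [:: 0; 0; gcd4 b; gcd4 b]) /\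
  (\sum_(i < 4) b i 0 < 0 ->
     exists U, in_superApollonian U /\
       perm_eq (entries (U *m b)) [:: 0; 0; - gcd4 b; - gcd4 b]).
Proof.
rewrite /descartes_rel /gcd4 [b]v4E !mxE /=.
rewrite -/(g4 _ _ _ _).
move: (b 0 0) (b 1 0) (b 2%:R 0) (b 3%:R 0) => a0 a1 a2 a3.
rewrite sum_v4 sumsq_v4 => H.
have N : null4 a0 a1 a2 a3 by [].
split=> hs.
- have [U [hU [h [hh [hp hg]]]]] := @mainP (absz (a0+a1+a2+a3)) a0 a1 a2 a3 N hs ltac:(rewrite abszE; exact: ler_norm).
  by exists U; split => //; rewrite hg.
- have N' : null4 (-a0) (-a1) (-a2) (-a3).
    by apply/nullQ; move/nullQ: N => <-; rewrite /Q4; ring.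
  have hs' : 0 < -a0 + -a1 + -a2 + -a3 by lra.
  have [U [hU [h [hh [hp hg]]]]] := @mainP (absz (-a0 + -a1 + -a2 + -a3)) _ _ _ _ N' hs' ltac:(rewrite abszE; exact: ler_norm).
  exists U; split => //.
  rewrite g4N in hg; rewrite hg.
  move: hp; rewrite v4N mulmxN entriesN => /(perm_map (fun x : int => - x)).
  by rewrite -map_comp (@eq_map _ _ _ id) ?map_id //= ?oppr0 // => x /=; rewrite opprK.
Qed.
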